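(* The function $H_2$ is given by the formula $$ H_2(z)=\frac{1}{2}\frac{(1-\vert z\vert^2)^4}{\vert1-z\vert^2} +\frac{1}{2}\frac{(1-\vert z\vert^2)^5}{\vert1-z\vert^4} -\frac{1}{4}\frac{(1-\vert z\vert^2)^4}{\vert1-z\vert^4} +\frac{1}{6}\frac{(1-\vert z\vert^2)^6}{\vert1-z\vert^6}, \quad z\in\mathbb{D}. $$
   Context: Let $\mathbb{D}$ be the unit disc, $\mathbb{T}=\partial\mathbb{D}$ the unit circle, $\Delta=\partial^2/\partial z\partial\bar z$, and for $\gamma>-1$ let $w_\gamma(z)=(1-\lvert z\rvert^2)^\gamma$, $z\in\mathbb{D}$. For a smooth function $u$ in $\mathbb{D}$ write $u_r(e^{i\theta})=u(re^{i\theta})$ for $0\le r<1$. We say $u=f_0$ on $\mathbb{T}$ (with $f_0\in\mathcal{D}'(\mathbb{T})$) if $\lim_{r\to1}u_r=f_0$ in $\mathcal{D}'(\mathbb{T})$, and the inward normal derivative is $\partial_n u=\lim_{r\to1}(u_r-f_0)/(1-r)$ in $\mathcal{D}'(\mathbb{T})$ when the limit exists. The Poisson kernel $H_\gamma$ is the (unique) solution, in this distributional sense, of $\Delta w_\gamma^{-1}\Delta H_\gamma=0$ in $\mathbb{D}$, $H_\gamma=0$ on $\mathbb{T}$, $\partial_n H_\gamma=\delta_1$ on $\mathbb{T}$, where $\delta_1$ is the unit Dirac mass at $1\in\mathbb{T}$. Here $\gamma=2$. *)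

(* Defs.v *)
From Stdlib Require Import Reals List.
From Coquelicot Require Import Coquelicot.
Open Scope R_scope.

(* Points of the plane are pairs (x,y), z = x + i y. *)
Definition in_disc (x y : R) : Prop := x ^ 2 + y ^ 2 < 1.

(* first-order partial derivative: true = d/dx, false = d/dy *)
Definition partial (b : bool) (f : R -> R -> R) : R -> R -> R :=
  if b then fun x y => Derive (fun t => f t y) x
       else fun x y => Derive (fun t => f x t) y.

Definition ex_partial (b : bool) (f : R -> R -> R) (x y : R) : Prop :=
  if b then ex_derive (fun t => f t y) x
       else ex_derive (fun t => f x t) y.

(* iterated partial derivative; the head of the list is applied last *)
Fixpoint dpartials (l : list bool) (f : R -> R -> R) : R -> R -> R :=
  match l with
  | nil => f
  | b :: l' => partial b (dpartials l' f)
  end.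

Definition smooth_on_disc (f : R -> R -> R) : Prop :=
  forall l : list bool,
    (forall x y, in_disc x y -> forall b, ex_partial b (dpartials l f) x y) /\
    (forall x y, in_disc x y -> continuity_2d_pt (dpartials l f) x y).

(* Delta = d^2 / dz dzbar = (1/4)(d_xx + d_yy) *)
Definition Delta (f : R -> R -> R) : R -> R -> R :=
  fun x y => / 4 * (dpartials (true :: true :: nil) f x y
                    + dpartials (false :: false :: nil) f x y).

Definition weight (gamma : nat) (x y : R) : R := (1 - (x ^ 2 + y ^ 2)) ^ gamma.

(* test functions on T, as smooth 2*PI-periodic functions of theta *)
Definition test_fun (phi : R -> R) : Prop :=
  (forall t, phi (t + 2 * PI) = phi t) /\ (forall n t, ex_derive_n phi n t).

(* a function g on T paired with a test function, with the normalized
   arc-length measure d theta / (2 pi) *)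
Definition pair_T (g : R -> R) (phi : R -> R) : R :=
  / (2 * PI) * RInt (fun t => g t * phi t) 0 (2 * PI).

Definition restr (u : R -> R -> R) (r : R) : R -> R :=
  fun t => u (r * cos t) (r * sin t).

(* u = 0 on T in the distributional sense: u_r -> 0 in D'(T) as r -> 1 *)
Definition boundary_zero (u : R -> R -> R) : Prop :=
  forall phi, test_fun phi ->
    filterlim (fun r => pair_T (restr u r) phi) (at_left 1) (locally 0).

(* d_n u = delta_1 on T (given u = 0 on T):
   (u_r - 0)/(1 - r) -> delta_1 in D'(T); <delta_1, phi> = phi(theta = 0) *)
Definition normal_derivative_dirac1 (u : R -> R -> R) : Prop :=
  forall phi, test_fun phi ->
    filterlim (fun r => pair_T (fun t => (restr u r t - 0) / (1 - r)) phi)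
      (at_left 1) (locally (phi 0)).

Definition is_poisson_kernel (gamma : nat) (u : R -> R -> R) : Prop :=
  smooth_on_disc u /\
  (forall x y, in_disc x y ->
     Delta (fun a b => / weight gamma a b * Delta u a b) x y = 0) /\
  boundary_zero u /\
  normal_derivative_dirac1 u.

Definition H2_formula (x y : R) : R :=
  let s := 1 - (x ^ 2 + y ^ 2) in
  let d := (1 - x) ^ 2 + y ^ 2 in
  / 2 * s ^ 4 / d + / 2 * s ^ 5 / d ^ 2 - / 4 * s ^ 4 / d ^ 2
  + / 6 * s ^ 6 / d ^ 3.

(* Main.v *)
Require Import Defs.
From Stdlib Require Import Reals List.
From Coquelicot Require Import Coquelicot.
From Stdlib Require Import Lra Nsatz.
Open Scope R_scope.

Inductive expr : Type :=
| EC (c : R) | EX | EY | EU | EV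
| EAdd (a b : expr) | EMul (a b : expr) | EPow (a : expr) (n : nat).

Definition dD (x y : R) := (1 - x) ^ 2 + y ^ 2.
Definition sS (x y : R) := 1 - (x ^ 2 + y ^ 2).

Fixpoint eval (e : expr) (x y : R) : R :=
  match e with
  | EC c => c | EX => x | EY => y
  | EU => / dD x y | EV => / sS x y
  | EAdd a b => eval a x y + eval b x y
  | EMul a b => eval a x y * eval b x y
  | EPow a n => eval a x y ^ n
  end.

Fixpoint deriv (b : bool) (e : expr) : expr :=
  match e with
  | EC _ => EC 0
  | EX => if b then EC 1 else EC 0
  | EY => if b then EC 0 else EC 1
  | EU => if b then EMul (EMul (EC 2) (EAdd (EC 1) (EMul (EC (-1)) EX))) (EPow EU 2)
          else EMul (EMul (EC (-2)) EY) (EPow EU 2)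
  | EV => if b then EMul (EMul (EC 2) EX) (EPow EV 2)
          else EMul (EMul (EC 2) EY) (EPow EV 2)
  | EAdd a c => EAdd (deriv b a) (deriv b c)
  | EMul a c => EAdd (EMul (deriv b a) c) (EMul a (deriv b c))
  | EPow a n => EMul (EMul (EC (INR n)) (EPow a (pred n))) (deriv b a)
  end.

Fixpoint derivs (l : list bool) (e : expr) : expr :=
  match l with nil => e | b :: l' => deriv b (derivs l' e) end.

Lemma dD_pos x y : in_disc x y -> 0 < dD x y.
Proof.
  unfold in_disc, dD; intros H.
  destruct (Req_dec y 0) as [->|Hy].
  - assert (x < 1) by nra. nra.
  - assert (0 < y^2) by (apply pow2_gt_0; auto). nra.
Qed.

Lemma sS_pos x y : in_disc x y -> 0 < sS x y.
Proof. unfold in_disc, sS; lra. Qed.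

Lemma disc_open x y : in_disc x y -> locally_2d (fun u v => in_disc u v) x y.
Proof.
  intros H.
  assert (C : continuity_2d_pt (fun u v => 1 - (u^2 + v^2)) x y).
  { apply continuity_2d_pt_minus. apply continuity_2d_pt_const.
    apply continuity_2d_pt_plus; simpl;
    repeat (apply continuity_2d_pt_mult; try apply continuity_2d_pt_id1;
            try apply continuity_2d_pt_id2; try apply continuity_2d_pt_const). }
  assert (Hp : 0 < 1 - (x^2+y^2)) by (unfold in_disc in H; lra).
  destruct (C (mkposreal _ Hp)) as [d Hd].
  exists d. intros u v Hu Hv. specialize (Hd u v Hu Hv). simpl in Hd.
  unfold in_disc. apply Rabs_def2 in Hd. lra.
Qed.

Lemma disc_loc_x x y : in_disc x y -> locally x (fun t => in_disc t y).
Proof.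
  intros H; destruct (disc_open x y H) as [d Hd]. exists d. intros t Ht.
  apply Hd. exact Ht. rewrite Rminus_diag, Rabs_R0. apply cond_pos.
Qed.

Lemma disc_loc_y x y : in_disc x y -> locally y (fun t => in_disc x t).
Proof.
  intros H; destruct (disc_open x y H) as [d Hd]. exists d. intros t Ht.
  apply Hd. rewrite Rminus_diag, Rabs_R0. apply cond_pos. exact Ht.
Qed.

Lemma is_derive_eq (f : R -> R) x l l' : is_derive f x l -> l = l' -> is_derive f x l'.
Proof. intros H ->; exact H. Qed.

Lemma is_derive_cst (c x : R) : is_derive (fun _ : R => c) x 0.
Proof. apply (is_derive_const (K:=R_AbsRing) (V:=R_NormedModule)). Qed.
Lemma is_derive_idR (x : R) : is_derive (fun t : R => t) x 1.
Proof. apply (is_derive_id (K:=R_AbsRing)). Qed.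

Lemma eval_derive_x e x y : in_disc x y ->
  is_derive (fun t => eval e t y) x (eval (deriv true e) x y).
Proof.
  intros H. induction e; simpl.
  - apply is_derive_cst.
  - apply is_derive_idR.
  - apply is_derive_cst.
  - pose proof (dD_pos x y H). unfold dD in *.
    auto_derive. repeat split; lra. field. lra.
  - pose proof (sS_pos x y H). unfold sS in *.
    auto_derive. repeat split; lra. field. lra.
  - apply (is_derive_plus (fun t => eval e1 t y) (fun t => eval e2 t y)); auto.
  - eapply is_derive_eq.
    { apply (is_derive_mult _ _ _ _ _ IHe1 IHe2). intros; apply Rmult_comm. }
    unfold plus, mult; simpl. ring.
  - eapply is_derive_eq. { apply (is_derive_pow _ _ _ _ IHe). } set (p := eval e x y ^ _). set (q := eval (deriv _ e) x y). change (INR n * q * p = INR n * p * q). ring.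
Qed.

Lemma eval_derive_y e x y : in_disc x y ->
  is_derive (fun t => eval e x t) y (eval (deriv false e) x y).
Proof.
  intros H. induction e; simpl.
  - apply is_derive_cst.
  - apply is_derive_cst.
  - apply is_derive_idR.
  - pose proof (dD_pos x y H). unfold dD in *.
    auto_derive. repeat split; lra. field. lra.
  - pose proof (sS_pos x y H). unfold sS in *.
    auto_derive. repeat split; lra. field. lra.
  - apply (is_derive_plus (fun t => eval e1 x t) (fun t => eval e2 x t)); auto.
  - eapply is_derive_eq.
    { apply (is_derive_mult _ _ _ _ _ IHe1 IHe2). intros; apply Rmult_comm. }
    unfold plus, mult; simpl. ring.
  - eapply is_derive_eq. { apply (is_derive_pow _ _ _ _ IHe). } set (p := eval e x y ^ _). set (q := eval (deriv _ e) x y). change (INR n * q * p = INR n * p * q). ring.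
Qed.

Lemma eval_cont e x y : in_disc x y -> continuity_2d_pt (eval e) x y.
Proof.
  intros H. induction e; simpl.
  - apply continuity_2d_pt_const.
  - apply continuity_2d_pt_id1.
  - apply continuity_2d_pt_id2.
  - apply (continuity_2d_pt_inv dD). unfold dD.
    apply continuity_2d_pt_plus; simpl;
    repeat (apply continuity_2d_pt_mult || apply continuity_2d_pt_minus ||
            apply continuity_2d_pt_id1 || apply continuity_2d_pt_id2 ||
            apply continuity_2d_pt_const).
    pose proof (dD_pos x y H); lra.
  - apply (continuity_2d_pt_inv sS). unfold sS.
    apply continuity_2d_pt_minus. apply continuity_2d_pt_const.
    apply continuity_2d_pt_plus; simpl;
    repeat (apply continuity_2d_pt_mult || apply continuity_2d_pt_id1 ||
            apply continuity_2d_pt_id2 || apply continuity_2d_pt_const).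
    pose proof (sS_pos x y H); lra.
  - apply (continuity_2d_pt_plus (eval e1) (eval e2)); auto.
  - apply (continuity_2d_pt_mult (eval e1) (eval e2)); auto.
  - induction n; simpl.
    + apply continuity_2d_pt_const.
    + apply (continuity_2d_pt_mult (eval e) (fun u v => eval e u v ^ n)); auto.
Qed.

Lemma dpartials_eval (f : R -> R -> R) (e : expr)
  (Hfe : forall x y, in_disc x y -> f x y = eval e x y) l : forall x y, in_disc x y ->
  dpartials l f x y = eval (derivs l e) x y.
Proof.
  induction l as [|b l IH]; intros x y H; simpl.
  - auto.
  - destruct b; simpl.
    + rewrite (Derive_ext_loc _ (fun t => eval (derivs l e) t y)).
      apply is_derive_unique, eval_derive_x; auto.
      generalize (disc_loc_x x y H). apply filter_imp. intros t Ht. auto.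
    + rewrite (Derive_ext_loc _ (fun t => eval (derivs l e) x t)).
      apply is_derive_unique, eval_derive_y; auto.
      generalize (disc_loc_y x y H). apply filter_imp. intros t Ht. auto.
Qed.

Lemma smooth_of_expr (f : R -> R -> R) (e : expr)
  (Hfe : forall x y, in_disc x y -> f x y = eval e x y) : smooth_on_disc f.
Proof.
  intros l; split.
  - intros x y H b; destruct b; simpl.
    + apply (ex_derive_ext_loc (fun t => eval (derivs l e) t y)).
      generalize (disc_loc_x x y H). apply filter_imp. intros t Ht.
      symmetry; apply (dpartials_eval f e Hfe); auto.
      eexists; apply eval_derive_x; auto.
    + apply (ex_derive_ext_loc (fun t => eval (derivs l e) x t)).
      generalize (disc_loc_y x y H). apply filter_imp. intros t Ht.
      symmetry; apply (dpartials_eval f e Hfe); auto.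
      eexists; apply eval_derive_y; auto.
  - intros x y H. apply (continuity_2d_pt_ext_loc (eval (derivs l e))).
    destruct (disc_open x y H) as [d Hd]. exists d. intros u v Hu Hv.
    symmetry; apply (dpartials_eval f e Hfe); auto.
    apply eval_cont; auto.
Qed.

Lemma derivs_replace e1 e2 (Heq : forall x y, in_disc x y -> eval e1 x y = eval e2 x y) l :
  forall x y, in_disc x y -> eval (derivs l e1) x y = eval (derivs l e2) x y.
Proof.
  intros x y H. rewrite <- (dpartials_eval (eval e1) e1), <- (dpartials_eval (eval e1) e2); auto.
Qed.
Definition ENG : expr := EAdd (EAdd (EAdd (EAdd (EAdd (EAdd (EAdd (EAdd (EAdd (EAdd (EAdd (EAdd (EAdd (EAdd (EAdd (EAdd (EAdd (EAdd (EAdd (EAdd (EAdd (EAdd (EAdd (EMul (EC (-3/2)) (EMul (EPow EX 0) (EPow EY 0))) (EMul (EC (24)) (EMul (EPow EX 0) (EPow EY 2)))) (EMul (EC (6)) (EMul (EPow EX 0) (EPow EY 4)))) (EMul (EC (6)) (EMul (EPow EX 0) (EPow EY 6)))) (EMul (EC (3/2)) (EMul (EPow EX 0) (EPow EY 8)))) (EMul (EC (-72)) (EMul (EPow EX 1) (EPow EY 2)))) (EMul (EC (-36)) (EMul (EPow EX 1) (EPow EY 4)))) (EMul (EC (-12)) (EMul (EPow EX 1) (EPow EY 6)))) (EMul (EC (24)) (EMul (EPow EX 2) (EPow EY 0)))) (EMul (EC (108)) (EMul (EPow EX 2) (EPow EY 2)))) (EMul (EC (54)) (EMul (EPow EX 2)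 (EPow EY 4)))) (EMul (EC (6)) (EMul (EPow EX 2) (EPow EY 6)))) (EMul (EC (-72)) (EMul (EPow EX 3) (EPow EY 0)))) (EMul (EC (-120)) (EMul (EPow EX 3) (EPow EY 2)))) (EMul (EC (-36)) (EMul (EPow EX 3) (EPow EY 4)))) (EMul (EC (102)) (EMul (EPow EX 4) (EPow EY 0)))) (EMul (EC (90)) (EMul (EPow EX 4) (EPow EY 2)))) (EMul (EC (9)) (EMul (EPow EX 4) (EPow EY 4)))) (EMul (EC (-84)) (EMul (EPow EX 5) (EPow EY 0)))) (EMul (EC (-36)) (EMul (EPow EX 5) (EPow EY 2)))) (EMul (EC (42)) (EMul (EPow EX 6) (EPow EY 0)))) (EMul (EC (6)) (EMul (EPow EX 6) (EPow EY 2)))) (EMul (EC (-12)) (EMul (EPow EX 7) (EPow EY 0)))) (EMul (EC (3/2)) (EMul (EPow EX 8) (EPow EY 0))).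

Definition ES : expr := EAdd (EC 1) (EMul (EC (-1)) (EAdd (EPow EX 2) (EPow EY 2))).
Definition EG : expr := EMul ENG (EPow EU 4).

Lemma final_zero x y : in_disc x y ->
  eval (deriv true (deriv true EG)) x y + eval (deriv false (deriv false EG)) x y = 0.
Proof.
  intros H. pose proof (dD_pos x y H). simpl. unfold dD in *.
  field. lra.
Qed.

Definition EH : expr :=
  EAdd (EAdd (EAdd (EMul (EC (/2)) (EMul (EPow ES 4) EU))
                   (EMul (EC (/2)) (EMul (EPow ES 5) (EPow EU 2))))
             (EMul (EC (-/4)) (EMul (EPow ES 4) (EPow EU 2))))
       (EMul (EC (/6)) (EMul (EPow ES 6) (EPow EU 3))).

Lemma EH_ok x y : in_disc x y -> H2_formula x y = eval EH x y.
Proof.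
  intros H. pose proof (dD_pos x y H). unfold H2_formula. simpl. unfold dD in *.
  field. lra.
Qed.

Lemma lap_H x y : in_disc x y ->
  / 4 * (eval (deriv true (deriv true EH)) x y + eval (deriv false (deriv false EH)) x y)
  = eval (EMul (EPow ES 2) EG) x y.
Proof.
  intros H. pose proof (dD_pos x y H). simpl. unfold dD in *.
  field. lra.
Qed.

Lemma H2_smooth : smooth_on_disc H2_formula.
Proof. apply (smooth_of_expr _ EH). intros; apply EH_ok; auto. Qed.

Lemma delta_H2 a b : in_disc a b -> Defs.Delta H2_formula a b = eval (EMul (EPow ES 2) EG) a b.
Proof.
  intros H. unfold Defs.Delta.
  rewrite !(dpartials_eval H2_formula EH) by (auto; intros; apply EH_ok; auto).
  simpl derivs. apply lap_H; auto.
Qed.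

Lemma g_eq a b : in_disc a b -> / weight 2 a b * Defs.Delta H2_formula a b = eval EG a b.
Proof.
  intros H. rewrite delta_H2 by auto. pose proof (sS_pos a b H). unfold sS in *.
  unfold weight. change (eval (EMul (EPow ES 2) EG) a b) with (eval ES a b ^ 2 * eval EG a b).
  replace (eval ES a b) with (1 - (a^2+b^2)) by (simpl; ring).
  field. lra.
Qed.

Lemma H2_pde x y : in_disc x y ->
  Defs.Delta (fun a b => / weight 2 a b * Defs.Delta H2_formula a b) x y = 0.
Proof.
  intros H. unfold Defs.Delta at 1.
  rewrite !(dpartials_eval _ EG) by (auto; intros; apply g_eq; auto).
  simpl derivs. rewrite final_zero by auto. ring.
Qed.

Definition dd (r t : R) := 1 - 2 * r * cos t + r ^ 2.

Lemma dd_pos r t : 0 < r < 1 -> 0 < dd r t.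
Proof. intros H. unfold dd. pose proof (COS_bound t). nra. Qed.

Lemma one_m_rc r t : 0 < r < 1 -> 0 < 1 - r * cos t.
Proof. intros H. pose proof (COS_bound t). nra. Qed.

Definition Aa (r t : R) := t + 2 * atan (r * sin t / (1 - r * cos t)).

Lemma Aa_deriv r t : 0 < r < 1 -> is_derive (Aa r) t ((1 - r^2) / dd r t).
Proof.
  intros H. pose proof (dd_pos r t H). pose proof (one_m_rc r t H).
  unfold Aa, dd in *. auto_derive. lra.
  pose proof (sin2_cos2 t) as E. unfold Rsqr in E.
  set (c := cos t) in *. set (s := sin t) in *.
  clearbody c s. field_simplify_eq. simpl. nsatz.
  repeat split; intro Hz; nra.
Qed.

Definition hr (r t : R) : R :=
  let s := 1 - r ^ 2 in let d := dd r t in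
  / 2 * s ^ 4 / d + / 2 * s ^ 5 / d ^ 2 - / 4 * s ^ 4 / d ^ 2 + / 6 * s ^ 6 / d ^ 3.

Definition alpha (r : R) : R :=
  let s := 1 - r ^ 2 in let m := 1 + r ^ 2 in
  s ^ 3 / 2 + s ^ 2 * m / 2 - s * m / 4 + s * (1 + 4 * r ^ 2 + r ^ 4) / 6.

Definition Fanti (r t : R) : R :=
  let s := 1 - r ^ 2 in let m := 1 + r ^ 2 in
  alpha r * Aa r t + r * s ^ 2 * (s - / 2 + m / 2) * (sin t / dd r t)
  + r * s ^ 4 / 6 * (sin t / dd r t ^ 2).

Lemma sin_dd_deriv r t : 0 < r < 1 ->
  is_derive (fun u => sin u / dd r u) t
    (- ((1 + r^2) / (2 * r)) / dd r t + ((1 - r^2)^2 / (2 * r)) / dd r t ^ 2).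
Proof.
  intros H. pose proof (dd_pos r t H). unfold dd in *. auto_derive. lra.
  pose proof (sin2_cos2 t) as E. unfold Rsqr in E.
  set (c := cos t) in *. set (s := sin t) in *.
  clearbody c s. field_simplify_eq. simpl. nsatz.
  repeat split; intro Hz; nra.
Qed.

Lemma sin_dd2_deriv r t : 0 < r < 1 ->
  is_derive (fun u => sin u / dd r u ^ 2) t
    (/ (2 * r) / dd r t - (3 * (1 + r^2) / (2 * r)) / dd r t ^ 2
     + ((1 - r^2)^2 / r) / dd r t ^ 3).
Proof.
  intros H. pose proof (dd_pos r t H). unfold dd in *. auto_derive. { apply Rgt_not_eq. apply Rmult_lt_0_compat; nra. }
  pose proof (sin2_cos2 t) as E. unfold Rsqr in E.
  set (c := cos t) in *. set (s := sin t) in *.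
  clearbody c s. field_simplify_eq. simpl. nsatz.
  repeat split; intro Hz; nra.
Qed.


Lemma Fanti_alg (r D : R) : 0 < r < 1 -> 0 < D ->
  alpha r * ((1 - r^2) / D) +
  r * (1 - r ^ 2) ^ 2 * (1 - r ^ 2 - / 2 + (1 + r ^ 2) / 2) *
   (- ((1 + r^2) / (2 * r)) / D + ((1 - r^2)^2 / (2 * r)) / D ^ 2) +
  r * (1 - r ^ 2) ^ 4 / 6 *
   (/ (2 * r) / D - (3 * (1 + r^2) / (2 * r)) / D ^ 2 + ((1 - r^2)^2 / r) / D ^ 3)
  = / 2 * (1 - r ^ 2) ^ 4 / D + / 2 * (1 - r ^ 2) ^ 5 / D ^ 2 -
  / 4 * (1 - r ^ 2) ^ 4 / D ^ 2 + / 6 * (1 - r ^ 2) ^ 6 / D ^ 3.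
Proof.
  intros H HD. unfold alpha. cbv zeta. field. split; lra.
Qed.

Lemma Fanti_deriv r t : 0 < r < 1 -> is_derive (Fanti r) t (hr r t).
Proof.
  intros H. unfold Fanti.
  pose proof (Aa_deriv r t H) as A1. pose proof (sin_dd_deriv r t H) as A2.
  pose proof (sin_dd2_deriv r t H) as A3.
  pose proof (dd_pos r t H).
  eapply is_derive_eq. eapply is_derive_ext.
  2: { apply (is_derive_plus _ _ _ _ _
          (is_derive_plus _ _ _ _ _ (is_derive_scal _ _ (alpha r) _ A1)
                                   (is_derive_scal _ _ (r * (1 - r ^ 2) ^ 2 * (1 - r ^ 2 - / 2 + (1 + r ^ 2) / 2)) _ A2))
          (is_derive_scal _ _ (r * (1 - r ^ 2) ^ 4 / 6) _ A3)). }
  intros u. simpl. unfold plus; simpl. reflexivity.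
  unfold plus; simpl. exact (Fanti_alg r (dd r t) H H0).
Qed.

Lemma ballR (x e y : R) : ball x e y <-> Rabs (y - x) < e.
Proof. reflexivity. Qed.

Lemma at_left_intro (P : R -> Prop) (d : posreal) :
  (forall r, 1 - d < r < 1 -> P r) -> at_left 1 P.
Proof.
  intros H. exists d. intros r Hr Hlt. apply H. apply (proj1 (ballR _ _ _)) in Hr.
  apply Rabs_def2 in Hr. lra.
Qed.

Lemma cont_eps (f : R -> R) x : continuous f x ->
  forall eps, 0 < eps -> exists d, 0 < d /\ forall t, Rabs (t - x) < d -> Rabs (f t - f x) < eps.
Proof.
  intros Hc eps He. destruct (proj1 (filterlim_locally f (f x)) Hc (mkposreal eps He)) as [d Hd].
  exists d. split. apply cond_pos. intros t Ht. apply Hd. exact Ht.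
Qed.

Definition Pk (r t : R) := (1 - r ^ 2) / dd r t.
Definition Kr (r t : R) := hr r t / (1 - r).

Lemma dd_lower r t : 0 < r < 1 -> (1 - r) ^ 2 <= dd r t.
Proof. intros H. unfold dd. pose proof (COS_bound t). nra. Qed.

Lemma Pk_nonneg r t : 0 < r < 1 -> 0 <= Pk r t.
Proof.
  intros H. pose proof (dd_pos r t H). unfold Pk. apply Rmult_le_pos. nra.
  left; apply Rinv_0_lt_compat; auto.
Qed.

Lemma hr_bound r t : 0 < r < 1 -> Rabs (hr r t) <= 7 * (1 - r ^ 2) * Pk r t.
Proof.
  intros H. pose proof (dd_pos r t H). pose proof (dd_lower r t H).
  unfold hr, Pk. cbv zeta. set (D := dd r t) in *. set (s := 1 - r ^ 2).
  assert (Hs : 0 < s < 1) by (unfold s; nra).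
  set (q := s ^ 2 / D).
  assert (Hq0 : 0 <= q) by (unfold q; apply Rmult_le_pos; [nra | left; apply Rinv_0_lt_compat; lra]).
  assert (Hq4 : q <= 4).
  { unfold q. apply (Rmult_le_reg_r D). lra. unfold Rdiv. rewrite Rmult_assoc, Rinv_l by lra.
    unfold s. rewrite Rmult_1_r. replace ((1 - r ^ 2) ^ 2) with ((1 - r) ^ 2 * (1 + r) ^ 2) by ring.
    apply Rle_trans with ((1 - r) ^ 2 * 4). apply Rmult_le_compat_l. nra. nra. lra. }
  assert (E : / 2 * s ^ 4 / D + / 2 * s ^ 5 / D ^ 2 - / 4 * s ^ 4 / D ^ 2 + / 6 * s ^ 6 / D ^ 3
              = s * (s / D) * (s ^ 2 / 2 + s * q / 2 - q / 4 + q ^ 2 / 6)).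
  { unfold q. field. lra. }
  rewrite E. assert (HP : 0 <= s / D) by (apply Rmult_le_pos; [lra | left; apply Rinv_0_lt_compat; lra]).
  rewrite Rabs_mult. rewrite (Rabs_right (s * (s / D))) by (apply Rle_ge; apply Rmult_le_pos; lra).
  replace (7 * s * (s / D)) with (s * (s / D) * 7) by ring.
  apply Rmult_le_compat_l. apply Rmult_le_pos; lra.
  apply Rabs_le. split; nra.
Qed.

Lemma Kr_bound r t : 0 < r < 1 -> Rabs (Kr r t) <= 14 * Pk r t.
Proof.
  intros H. unfold Kr. pose proof (hr_bound r t H). pose proof (Pk_nonneg r t H).
  unfold Rdiv. rewrite Rabs_mult, (Rabs_right (/ (1 - r))) by (apply Rle_ge; left; apply Rinv_0_lt_compat; lra).
  apply (Rmult_le_reg_r (1 - r)). lra. rewrite Rmult_assoc, Rinv_l by lra.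
  replace (7 * (1 - r ^ 2) * Pk r t) with (7 * (1 + r) * (Pk r t * (1 - r))) in H0 by ring.
  assert (0 <= Pk r t * (1 - r)) by (apply Rmult_le_pos; lra).
  rewrite Rmult_1_r. nra.
Qed.

Lemma cos_sym t : cos (2 * PI - t) = cos t.
Proof. rewrite cos_minus, cos_2PI, sin_2PI. ring. Qed.

Lemma cos_mid d t : 0 < d <= PI -> d <= t <= 2 * PI - d -> cos t <= cos d.
Proof.
  intros Hd Ht. pose proof PI_RGT_0.
  destruct (Rle_lt_dec t PI).
  - destruct (Req_dec t d) as [->|]; [lra|].
    left; apply cos_decreasing_1; lra.
  - rewrite <- cos_sym. destruct (Req_dec (2 * PI - t) d) as [->|]; [lra|].
    left; apply cos_decreasing_1; lra.
Qed.

Lemma one_m_cos d : 0 < d <= PI -> 0 < 1 - cos d.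
Proof.
  intros Hd. pose proof PI_RGT_0. assert (cos d < cos 0) by (apply cos_decreasing_1; lra).
  rewrite cos_0 in H0. lra.
Qed.

Lemma Pk_mid r d t : / 2 <= r < 1 -> 0 < d <= PI -> d <= t <= 2 * PI - d ->
  Pk r t <= (1 - r ^ 2) / (1 - cos d).
Proof.
  intros Hr Hd Ht. pose proof (cos_mid d t Hd Ht). pose proof (one_m_cos d Hd).
  assert (Hr' : 0 < r < 1) by lra. pose proof (dd_pos r t Hr').
  unfold Pk. unfold Rdiv. apply Rmult_le_compat_l. nra.
  apply Rinv_le_contravar. auto. unfold dd. nra.
Qed.

Lemma hr_cont r t : 0 < r < 1 -> ex_derive (hr r) t.
Proof.
  intros H. pose proof (dd_pos r t H). unfold hr, dd in *. cbv zeta.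
  auto_derive. repeat split; apply Rgt_not_eq; repeat apply Rmult_lt_0_compat; lra.
Qed.

Lemma is_RInt_hr r : 0 < r < 1 -> is_RInt (hr r) 0 (2 * PI) (2 * PI * alpha r).
Proof.
  intros H. pose proof PI_RGT_0.
  replace (2 * PI * alpha r) with (minus (Fanti r (2 * PI)) (Fanti r 0)).
  apply (is_RInt_derive (V := R_CompleteNormedModule)). intros; apply Fanti_deriv; auto.
  intros x _; exact (ex_derive_continuous (hr r) x (hr_cont r x H)).
  unfold minus, plus, opp; simpl. unfold Fanti, Aa. cbv zeta.
  rewrite sin_2PI, cos_2PI, sin_0, cos_0. replace (r * 0 / (1 - r * 1)) with 0 by (unfold Rdiv; ring). rewrite atan_0. unfold Rdiv. ring.
Qed.

Lemma Aa_cont r t : 0 < r < 1 -> ex_derive (Pk r) t.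
Proof.
  intros H. pose proof (dd_pos r t H). unfold Pk, dd in *.
  auto_derive. apply Rgt_not_eq; lra.
Qed.

Lemma is_RInt_Pk r : 0 < r < 1 -> is_RInt (Pk r) 0 (2 * PI) (2 * PI).
Proof.
  intros H. pose proof PI_RGT_0.
  assert (E : minus (Aa r (2 * PI)) (Aa r 0) = 2 * PI).
  { unfold minus, plus, opp; simpl. unfold Aa.
    rewrite sin_2PI, cos_2PI, sin_0, cos_0. replace (r * 0 / (1 - r * 1)) with 0 by (unfold Rdiv; ring).
    rewrite atan_0. ring. }
  cut (is_RInt (Pk r) 0 (2 * PI) (minus (Aa r (2 * PI)) (Aa r 0))).
  { intros Hc. rewrite E in Hc. exact Hc. }
  apply (is_RInt_derive (V := R_CompleteNormedModule)). intros; apply Aa_deriv; auto.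
  intros x _; exact (ex_derive_continuous (Pk r) x (Aa_cont r x H)).
Qed.

Lemma ex_RInt_cont (f : R -> R) a b : (forall t, continuous f t) -> ex_RInt f a b.
Proof. intros H. apply (ex_RInt_continuous (V := R_CompleteNormedModule)). intros; apply H. Qed.

Lemma cont_mult (f g : R -> R) t : continuous f t -> continuous g t -> continuous (fun u => f u * g u) t.
Proof. intros. apply (continuous_mult f g t); auto. Qed.

Lemma cont_minus_c (f : R -> R) c t : continuous f t -> continuous (fun u => f u - c) t.
Proof.
  intros. apply (continuous_plus f (fun _ => - c) t); auto. apply continuous_const.
Qed.

Lemma Kr_cont r t : 0 < r < 1 -> continuous (Kr r) t.
Proof.
  intros H. assert (Hd : ex_derive (Kr r) t).
  { pose proof (dd_pos r t H). unfold Kr, hr, dd in *. cbv zeta.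
    auto_derive. repeat split; apply Rgt_not_eq; repeat apply Rmult_lt_0_compat; lra. }
  exact (ex_derive_continuous (Kr r) t Hd).
Qed.

Lemma alpha_N r : 0 < r < 1 -> Rabs (alpha r / (1 - r) - 1) <= 2 * (1 - r).
Proof.
  intros H.
  replace (alpha r / (1 - r) - 1) with
    ((1 - r) * (- / 12 + 5 / 6 * r + / 4 * r ^ 2 - / 3 * r ^ 3 - / 6 * r ^ 4)).
  2: { unfold alpha. cbv zeta. field. lra. }
  rewrite Rabs_mult, Rabs_right by lra. rewrite Rmult_comm.
  apply Rmult_le_compat_r. lra.
  assert (0 <= r ^ 2 <= 1) by (split; nra).
  assert (0 <= r ^ 3 <= 1) by (split; simpl; nra).
  assert (0 <= r ^ 4 <= 1) by (split; simpl; nra).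
  apply Rabs_le. split; lra.
Qed.

Lemma RInt_Kr r : 0 < r < 1 -> RInt (Kr r) 0 (2 * PI) = 2 * PI * (alpha r / (1 - r)).
Proof.
  intros H. apply is_RInt_unique.
  pose proof (is_RInt_scal _ _ _ (/ (1 - r)) _ (is_RInt_hr r H)) as J.
  unfold scal in J; simpl in J; unfold mult in J; simpl in J.
  replace (2 * PI * (alpha r / (1 - r))) with (/ (1 - r) * (2 * PI * alpha r)) by (field; lra).
  eapply is_RInt_ext. 2: exact J. intros; unfold Kr; unfold Rdiv; apply Rmult_comm.
Qed.

Lemma approx (phi : R -> R) (Hc : forall t, continuous phi t) (Hp : phi (2 * PI) = phi 0) :
  filterlim (fun r => / (2 * PI) * RInt (fun t => Kr r t * phi t) 0 (2 * PI))
    (at_left 1) (locally (phi 0)).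
Proof.
  pose proof PI_RGT_0 as HPI.
  apply filterlim_locally. intros eps. set (e := pos eps).
  assert (He : 0 < e) by apply cond_pos.
  destruct (cont_eps phi 0 (Hc 0) (e / 42)) as [d1 [Hd1 Hd1']]. lra.
  destruct (cont_eps phi (2 * PI) (Hc _) (e / 42)) as [d2 [Hd2 Hd2']]. lra.
  rewrite Hp in Hd2'.
  set (d := Rmin (Rmin d1 d2) PI / 2).
  assert (Hd : 0 < d /\ d < d1 /\ d < d2 /\ d <= PI).
  { assert (0 < Rmin (Rmin d1 d2) PI) by (repeat apply Rmin_glb_lt; lra).
    pose proof (Rmin_l (Rmin d1 d2) PI). pose proof (Rmin_r (Rmin d1 d2) PI).
    pose proof (Rmin_l d1 d2). pose proof (Rmin_r d1 d2).
    unfold d. lra. }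
  destruct Hd as (Hd0 & Hdd1 & Hdd2 & HdPI).
  destruct (continuity_ab_maj (fun t => Rabs (phi t - phi 0)) 0 (2 * PI)) as [Mx [HM _]]. lra.
  { intros c _. apply continuity_pt_filterlim. apply (continuous_Rabs_comp (fun t => phi t - phi 0)).
    apply cont_minus_c. apply Hc. }
  set (B := Rabs (phi Mx - phi 0)).
  assert (HB : 0 <= B) by apply Rabs_pos.
  pose proof (one_m_cos d (conj Hd0 HdPI)) as Hcd. set (cd := 1 - cos d) in *.
  set (rho := Rmin (/ 2) (Rmin (e * cd / (84 * (B + 1))) (e / (6 * (Rabs (phi 0) + 1))))).
  assert (Hr1 : 0 < e * cd / (84 * (B + 1))).
  { apply Rmult_lt_0_compat. nra. apply Rinv_0_lt_compat. lra. }
  assert (Hr2 : 0 < e / (6 * (Rabs (phi 0) + 1))).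
  { apply Rmult_lt_0_compat. lra. apply Rinv_0_lt_compat. pose proof (Rabs_pos (phi 0)). lra. }
  assert (Hrho : 0 < rho /\ rho <= / 2 /\ rho <= e * cd / (84 * (B + 1)) /\ rho <= e / (6 * (Rabs (phi 0) + 1))).
  { assert (0 < rho) by (unfold rho; repeat apply Rmin_glb_lt; lra).
    unfold rho in *. set (a1 := e * cd / (84 * (B + 1))) in *. set (a2 := e / (6 * (Rabs (phi 0) + 1))) in *.
    pose proof (Rmin_l (/2) (Rmin a1 a2)). pose proof (Rmin_r (/2) (Rmin a1 a2)).
    pose proof (Rmin_l a1 a2). pose proof (Rmin_r a1 a2). lra. }
  destruct Hrho as (Hrho0 & Hrho1 & Hrho2 & Hrho3).
  apply (at_left_intro _ (mkposreal rho Hrho0)). intros r Hr. simpl in Hr.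
  apply ballR.
  assert (Hr' : 0 < r < 1) by lra.
  assert (Hrh : / 2 <= r) by lra.
  assert (IK : forall t, continuous (Kr r) t) by (intros; apply Kr_cont; auto).
  assert (I1 : ex_RInt (fun t => Kr r t * (phi t - phi 0)) 0 (2 * PI)).
  { apply ex_RInt_cont. intros; apply cont_mult; auto. apply cont_minus_c; auto. }
  assert (I2 : ex_RInt (Kr r) 0 (2 * PI)) by (apply ex_RInt_cont; auto).
  assert (Edec : RInt (fun t => Kr r t * phi t) 0 (2 * PI)
                 = RInt (fun t => Kr r t * (phi t - phi 0)) 0 (2 * PI) + phi 0 * RInt (Kr r) 0 (2 * PI)).
  { apply is_RInt_unique.
    eapply is_RInt_ext.
    2: { apply (is_RInt_plus _ _ _ _ _ _ (RInt_correct _ _ _ I1) (is_RInt_scal _ _ _ (phi 0) _ (RInt_correct _ _ _ I2))). }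
    intros t _. unfold plus, scal; simpl; unfold mult; simpl.
    match goal with |- ?a = ?b => change (@eq R a b) end. ring. }
  rewrite Edec, RInt_Kr by auto.
  set (I := RInt (fun t => Kr r t * (phi t - phi 0)) 0 (2 * PI)).
  set (eta := (1 - r ^ 2) / cd).
  assert (HI : Rabs I <= 2 * PI * (14 * (e / 42)) + 2 * PI * (14 * B * eta)).
  { unfold I. eapply Rle_trans. apply abs_RInt_le. lra. auto.
    assert (Ig : is_RInt (fun t => 14 * (e / 42) * Pk r t + 14 * B * eta) 0 (2 * PI)
                   (14 * (e / 42) * (2 * PI) + (2 * PI - 0) * (14 * B * eta))).
    { exact (is_RInt_plus _ _ _ _ _ _ (is_RInt_scal _ _ _ (14 * (e / 42)) _ (is_RInt_Pk r Hr'))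
              (is_RInt_const 0 (2 * PI) (14 * B * eta))). }
    apply Rle_trans with (RInt (fun t => 14 * (e / 42) * Pk r t + 14 * B * eta) 0 (2 * PI)).
    2: { rewrite (is_RInt_unique _ _ _ _ Ig). lra. }
    apply RInt_le. lra.
    apply ex_RInt_cont. intros t. apply (continuous_Rabs_comp (fun t => Kr r t * (phi t - phi 0))). apply cont_mult; auto. apply cont_minus_c; auto.
    eexists; exact Ig.
    intros t Ht.
    rewrite Rabs_mult. pose proof (Kr_bound r t Hr'). pose proof (Pk_nonneg r t Hr').
    pose proof (Rabs_pos (Kr r t)). pose proof (Rabs_pos (phi t - phi 0)).
    assert (HpB : Rabs (phi t - phi 0) <= B) by (apply HM; lra).
    destruct (Rlt_le_dec t d) as [Ht1|Ht1].
    { assert (Rabs (phi t - phi 0) < e / 42) by (apply Hd1'; rewrite Rminus_0_r, Rabs_right; lra).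
      assert (0 <= B * eta) by (apply Rmult_le_pos; auto; unfold eta; apply Rmult_le_pos; [nra | left; apply Rinv_0_lt_compat; lra]).
      apply Rle_trans with (14 * Pk r t * Rabs (phi t - phi 0)). apply Rmult_le_compat_r; lra. nra. }
    destruct (Rlt_le_dec (2 * PI - d) t) as [Ht2|Ht2].
    { assert (Rabs (phi t - phi 0) < e / 42) by (apply Hd2'; rewrite Rabs_left; lra).
      assert (0 <= B * eta) by (apply Rmult_le_pos; auto; unfold eta; apply Rmult_le_pos; [nra | left; apply Rinv_0_lt_compat; lra]).
      apply Rle_trans with (14 * Pk r t * Rabs (phi t - phi 0)). apply Rmult_le_compat_r; lra. nra. }
    pose proof (Pk_mid r d t (conj Hrh (proj2 Hr')) (conj Hd0 HdPI) (conj Ht1 Ht2)) as Hmid.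
    fold cd eta in Hmid.
    assert (0 <= e / 42 * Pk r t) by (apply Rmult_le_pos; lra).
    apply Rle_trans with (14 * Pk r t * Rabs (phi t - phi 0)). apply Rmult_le_compat_r; lra.
    apply Rle_trans with (14 * eta * B). 2: lra.
    apply Rmult_le_compat; nra. }
  assert (Heta : 14 * B * eta < e / 3).
  { unfold eta. apply Rle_lt_trans with (14 * B * (2 * (1 - r) / cd)).
    apply Rmult_le_compat_l. nra. unfold Rdiv. apply Rmult_le_compat_r. left; apply Rinv_0_lt_compat; lra. nra.
    apply Rle_lt_trans with (14 * B * (2 * (e * cd / (84 * (B + 1))) / cd)).
    apply Rmult_le_compat_l. nra. unfold Rdiv. apply Rmult_le_compat_r. left; apply Rinv_0_lt_compat; lra.
    unfold Rdiv in Hrho2. lra.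
    replace (14 * B * (2 * (e * cd / (84 * (B + 1))) / cd)) with (e / 3 * (B / (B + 1))) by (field; lra).
    assert (B / (B + 1) < 1). { apply (Rmult_lt_reg_r (B + 1)). lra. unfold Rdiv. rewrite Rmult_assoc, Rinv_l by lra. lra. }
    nra. }
  assert (HN : Rabs (phi 0) * Rabs (alpha r / (1 - r) - 1) < e / 3).
  { pose proof (alpha_N r Hr'). pose proof (Rabs_pos (phi 0)).
    apply Rle_lt_trans with (Rabs (phi 0) * (2 * (1 - r))). apply Rmult_le_compat_l; lra.
    apply Rle_lt_trans with (Rabs (phi 0) * (2 * (e / (6 * (Rabs (phi 0) + 1))))).
    apply Rmult_le_compat_l; lra.
    replace (Rabs (phi 0) * (2 * (e / (6 * (Rabs (phi 0) + 1))))) with (e / 3 * (Rabs (phi 0) / (Rabs (phi 0) + 1))) by (field; lra).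
    assert (Rabs (phi 0) / (Rabs (phi 0) + 1) < 1). { apply (Rmult_lt_reg_r (Rabs (phi 0) + 1)). lra. unfold Rdiv. rewrite Rmult_assoc, Rinv_l by lra. lra. }
    nra. }
  replace (/ (2 * PI) * (I + phi 0 * (2 * PI * (alpha r / (1 - r)))) - phi 0)
    with (/ (2 * PI) * I + phi 0 * (alpha r / (1 - r) - 1)) by (field; lra).
  eapply Rle_lt_trans. apply Rabs_triang. rewrite !Rabs_mult.
  rewrite (Rabs_right (/ (2 * PI))) by (apply Rle_ge; left; apply Rinv_0_lt_compat; lra).
  assert (/ (2 * PI) * Rabs I <= 14 * (e / 42) + 14 * B * eta).
  { apply (Rmult_le_reg_l (2 * PI)). lra. rewrite <- Rmult_assoc, Rinv_r by lra. lra. }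
  lra.
Qed.

Lemma restr_eq r t : restr H2_formula r t = hr r t.
Proof.
  unfold restr, H2_formula, hr, dd. cbv zeta.
  pose proof (sin2_cos2 t) as E. unfold Rsqr in E.
  assert (E1 : 1 - ((r * cos t) ^ 2 + (r * sin t) ^ 2) = 1 - r ^ 2).
  { replace ((r * cos t) ^ 2 + (r * sin t) ^ 2) with (r ^ 2 * (sin t * sin t + cos t * cos t)) by ring.
    rewrite E. ring. }
  assert (E2 : (1 - r * cos t) ^ 2 + (r * sin t) ^ 2 = 1 - 2 * r * cos t + r ^ 2).
  { replace ((1 - r * cos t) ^ 2 + (r * sin t) ^ 2) with (1 - 2 * r * cos t + r ^ 2 * (sin t * sin t + cos t * cos t)) by ring.
    rewrite E. ring. }
  rewrite E1, E2. reflexivity.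
Qed.

Lemma test_cont phi : test_fun phi -> forall t, continuous phi t.
Proof.
  intros [_ H] t. exact (ex_derive_continuous phi t (H 1%nat t)).
Qed.

Lemma test_per phi : test_fun phi -> phi (2 * PI) = phi 0.
Proof.
  intros [H _]. rewrite <- (H 0). f_equal. ring.
Qed.

Lemma pair_eq phi r : test_fun phi -> 0 < r < 1 ->
  pair_T (fun t => (restr H2_formula r t - 0) / (1 - r)) phi
  = / (2 * PI) * RInt (fun t => Kr r t * phi t) 0 (2 * PI).
Proof.
  intros Hphi H. unfold pair_T. f_equal. apply RInt_ext. intros x _.
  rewrite restr_eq. unfold Kr. match goal with |- ?a = ?b => change (@eq R a b) end. unfold Rdiv. ring.
Qed.

Lemma H2_normal : normal_derivative_dirac1 H2_formula.
Proof.
  intros phi Hphi.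
  eapply filterlim_ext_loc. 2: apply (approx phi (test_cont phi Hphi) (test_per phi Hphi)).
  apply (at_left_intro _ (mkposreal 1 Rlt_0_1)). intros r Hr. simpl in Hr.
  symmetry. apply pair_eq; auto. lra.
Qed.

Lemma aux_scal r h p : 0 < r < 1 -> (1 - r) * (h / (1 - r) * p) = h * p.
Proof. intros. field. lra. Qed.

Lemma pair_eq0 phi r : test_fun phi -> 0 < r < 1 ->
  pair_T (restr H2_formula r) phi
  = (1 - r) * (/ (2 * PI) * RInt (fun t => Kr r t * phi t) 0 (2 * PI)).
Proof.
  intros Hphi H. unfold pair_T.
  assert (I1 : ex_RInt (fun t => Kr r t * phi t) 0 (2 * PI)).
  { apply ex_RInt_cont. intros; apply cont_mult. apply Kr_cont; auto. apply test_cont; auto. }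
  assert (E : RInt (fun t => restr H2_formula r t * phi t) 0 (2 * PI)
              = (1 - r) * RInt (fun t => Kr r t * phi t) 0 (2 * PI)).
  { apply is_RInt_unique.
    eapply is_RInt_ext. 2: exact (is_RInt_scal _ _ _ (1 - r) _ (RInt_correct _ _ _ I1)).
    intros x _. rewrite restr_eq. exact (aux_scal r (hr r x) (phi x) H). }
  rewrite E. ring.
Qed.

Lemma H2_bzero : boundary_zero H2_formula.
Proof.
  intros phi Hphi.
  pose proof (approx phi (test_cont phi Hphi) (test_per phi Hphi)) as Ap.
  apply filterlim_locally. intros eps.
  pose proof (proj1 (filterlim_locally _ _) Ap (mkposreal 1 Rlt_0_1)) as A.
  set (M := Rabs (phi 0) + 2).
  assert (HM : 0 < M) by (unfold M; pose proof (Rabs_pos (phi 0)); lra).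
  assert (He : 0 < eps) by apply cond_pos.
  assert (Hq : 0 < Rmin 1 (eps / M)) by (apply Rmin_glb_lt; [lra | apply Rmult_lt_0_compat; [lra | apply Rinv_0_lt_compat; lra]]).
  assert (Bd : at_left 1 (fun r => 0 < r < 1 /\ 1 - r < eps / M)).
  { apply (at_left_intro _ (mkposreal _ Hq)). intros r Hr. simpl in Hr.
    pose proof (Rmin_l 1 (eps / M)). pose proof (Rmin_r 1 (eps / M)). lra. }
  generalize (filter_and _ _ A Bd). apply filter_imp. intros r [H1 [H2 H3]].
  apply ballR. rewrite pair_eq0 by auto.
  simpl in H1.
  set (v := / (2 * PI) * RInt (fun t => Kr r t * phi t) 0 (2 * PI)) in *.
  assert (Hv : Rabs v < M).
  { unfold M. pose proof (Rabs_triang_inv v (phi 0)). assert (H1b : Rabs (v - phi 0) < 1) by exact H1. lra. }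
  rewrite Rminus_0_r, Rabs_mult, (Rabs_right (1 - r)) by lra.
  apply Rle_lt_trans with ((1 - r) * M). apply Rmult_le_compat_l; lra.
  apply (Rmult_lt_reg_r (/ M)). apply Rinv_0_lt_compat; lra.
  rewrite Rmult_assoc, Rinv_r by lra. rewrite Rmult_1_r. exact H3.
Qed.

Theorem theorem3p1 : is_poisson_kernel 2 H2_formula.
Proof.
  split. exact H2_smooth.
  split. exact H2_pde.
  split. exact H2_bzero.
  exact H2_normal.
Qed.
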